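(* Let $F$ be a Banach lattice. The set of weakly dispersed closed subspaces of $F$ is open in the gap topology, and so is the set of strongly dispersed closed subspaces. Moreover, for a closed subspace $E$ of $F$ the following are equivalent: (i) $E$ is weakly (resp. strongly) dispersed; (ii) the un-topology (resp. una-topology) coincides with the norm topology on $E$; (iii) the semi-norm $\rho_E$ and the un-topology (resp. una-topology) are complementary on $F$, i.e. there is no net in $\mathrm{S}_F$ which is null both in the un-topology (resp. una-topology) and with respect to $\rho_E$.
   Context: $\mathrm{S}_X$ denotes the unit sphere of a normed space $X$. $\rho_E(f)$ is the distance from $f$ to $E$. The un-topology on $F$ is the linear topology with a base of zero neighborhoods $\{f\in F:\||f|\wedge h\|<\varepsilon\}$, $h\in F_+$, $\varepsilon>0$. $F^a$ is the (closed) ideal of order continuous elements of $F$, and the una-topology is defined like the un-topology but with $h\in F^a_+$ only. A subspace $E$ is weakly (resp. strongly) dispersed if some un- (resp. una-) neighborhood of $0_F$ is disjoint from $\mathrm{S}_E$. The gap topology on closed subspaces of $F$ is given by the metric $d_2(G,H)$ equal to the Hausdorff distance between $\mathrm{S}_G$ and $\mathrm{S}_H$. *)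

(* Defs.v *)
From HB Require Import structures.
From mathcomp Require Import all_boot all_order all_algebra.
From mathcomp Require Import all_classical all_reals all_analysis.
Set Implicit Arguments. Unset Strict Implicit. Unset Printing Implicit Defensive.
Import Order.TTheory GRing.Theory Num.Theory.
Import numFieldNormedType.Exports.
Local Open Scope classical_set_scope.
Local Open Scope ring_scope.

Section BanachLattice.
Variables (R : realType) (V : completeNormedModType R).
Record lattice_ops := LatticeOps {
  lle : V -> V -> Prop; ljoin : V -> V -> V; lmeet : V -> V -> V }.
Variable L : lattice_ops.
Local Notation le := (lle L).
Local Notation join := (ljoin L).
Local Notation meet := (lmeet L).

Definition is_banach_lattice : Prop :=
  (forall x, le x x) /\
  (forall x y, le x y -> le y x -> x = y) /\
  (forall x y z, le x y -> le y z -> le x z) /\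
  (forall x y z, le x y -> le (x + z) (y + z)) /\
  (forall (a : R) x, 0 <= a -> le 0 x -> le 0 (a *: x)) /\
  (forall x y, le x (join x y) /\ le y (join x y) /\
               forall z, le x z -> le y z -> le (join x y) z) /\
  (forall x y, le (meet x y) x /\ le (meet x y) y /\
               forall z, le z x -> le z y -> le z (meet x y)) /\
  (forall x y, le (join x (- x)) (join y (- y)) -> `|x| <= `|y|).

Definition labs (f : V) : V := join f (- f).

Definition directed (I : Type) (leI : I -> I -> Prop) : Prop :=
  [/\ (exists i : I, True), (forall i, leI i i),
      (forall i j k, leI i j -> leI j k -> leI i k) &
      (forall i j, exists k, leI i k /\ leI j k)].

Definition eventually (I : Type) (leI : I -> I -> Prop) (P : I -> Prop) : Prop :=
  exists i0, forall i, leI i0 i -> P i.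

Definition order_continuous (f : V) : Prop :=
  forall (I : Type) (leI : I -> I -> Prop) (x : I -> V),
    directed leI ->
    (forall i j, leI i j -> le (x j) (x i)) ->
    (forall i, le 0 (x i) /\ le (x i) (labs f)) ->
    (forall g, (forall i, le g (x i)) -> le g 0) ->
    forall eps : R, 0 < eps -> eventually leI (fun i => `|x i| < eps).

Definition Uzero (h : V) (eps : R) : set V := [set f | `|meet (labs f) h| < eps].

(* admissible "h" for the un-topology (h in F_+) and una-topology (h in F^a_+) *)
Definition un_h (h : V) : Prop := le 0 h.
Definition una_h (h : V) : Prop := le 0 h /\ order_continuous h.

Definition lin_open (adm : V -> Prop) (O : set V) : Prop :=
  forall f, O f -> exists h eps, [/\ adm h, 0 < eps &
    forall g, Uzero h eps (g - f) -> O g].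

Definition un_open := lin_open un_h.
Definition una_open := lin_open una_h.

Definition sphere (E : set V) : set V := [set f | E f /\ `|f| = 1].

Definition closed_subspace (E : set V) : Prop :=
  [/\ E 0, (forall x y, E x -> E y -> E (x + y)),
      (forall (a : R) x, E x -> E (a *: x)) & closed E].

Definition dispersed (adm : V -> Prop) (E : set V) : Prop :=
  exists h eps, [/\ adm h, 0 < eps & Uzero h eps `&` sphere E = set0].

Definition weakly_dispersed := dispersed un_h.
Definition strongly_dispersed := dispersed una_h.

(* distance from a point to a set (+oo for the empty set) *)
Definition dist (f : V) (A : set V) : \bar R :=
  ereal_inf [set (`|f - a|)%:E | a in A].

Definition hausdorff (A B : set V) : \bar R :=
  maxe (ereal_sup [set dist a B | a in A]) (ereal_sup [set dist b A | b in B]).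

Definition gap (G H : set V) : \bar R := hausdorff (sphere G) (sphere H).

Definition gap_open (P : set V -> Prop) : Prop :=
  forall G, closed_subspace G -> P G ->
    exists delta : R, 0 < delta /\
      forall H, closed_subspace H -> (gap G H < delta%:E)%E -> P H.

Definition coincide_on (topen : set V -> Prop) (E : set V) : Prop :=
  forall A, A `<=` E ->
    ((exists O, topen O /\ A = E `&` O) <-> (exists O, open O /\ A = E `&` O)).

Definition lin_null (adm : V -> Prop) (I : Type) (leI : I -> I -> Prop) (x : I -> V) :=
  forall h (eps : R), adm h -> 0 < eps -> eventually leI (fun i => Uzero h eps (x i)).

Definition rho_null (E : set V) (I : Type) (leI : I -> I -> Prop) (x : I -> V) :=
  forall eps : R, 0 < eps -> eventually leI (fun i => (dist (x i) E < eps%:E)%E).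

Definition complementary (adm : V -> Prop) (E : set V) : Prop :=
  forall (I : Type) (leI : I -> I -> Prop) (x : I -> V),
    directed leI -> (forall i, `|x i| = 1) ->
    lin_null adm leI x -> rho_null E leI x -> False.

End BanachLattice.

(* Main.v *)
Require Import Defs.
From HB Require Import structures.
From mathcomp Require Import all_boot all_order all_algebra.
From mathcomp Require Import all_classical all_reals all_analysis.
From mathcomp Require Import ring lra.
Import Order.TTheory GRing.Theory Num.Theory.
Import numFieldNormedType.Exports.
Local Open Scope classical_set_scope.
Local Open Scope ring_scope.

Set Implicit Arguments. Unset Strict Implicit.

Section Lat.
Variables (R : realType) (V : completeNormedModType R) (L : lattice_ops V).
Hypothesis HF : is_banach_lattice L.
Local Notation le := (lle L).
Local Notation join := (ljoin L).
Local Notation meet := (lmeet L).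
Local Notation labs := (labs L).

Lemma lleR x : le x x. Proof. by case: HF. Qed.
Lemma lleA x y : le x y -> le y x -> x = y.
Proof. by case: HF => _ [H _]; apply: H. Qed.
Lemma lleT x y z : le x y -> le y z -> le x z.
Proof. by case: HF => _ [_ [H _]]; apply: H. Qed.
Lemma le_addr x y z : le x y -> le (x + z) (y + z).
Proof. by case: HF => _ [_ [_ [H _]]]; apply: H. Qed.
Lemma le_scale0 (a : R) x : 0 <= a -> le 0 x -> le 0 (a *: x).
Proof. by case: HF => _ [_ [_ [_ [H _]]]]; apply: H. Qed.
Lemma join_ub1 x y : le x (join x y).
Proof. by case: HF => _ [_ [_ [_ [_ [H _]]]]]; case: (H x y). Qed.
Lemma join_ub2 x y : le y (join x y).
Proof. by case: HF => _ [_ [_ [_ [_ [H _]]]]]; case: (H x y) => _ []. Qed.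
Lemma join_lub x y z : le x z -> le y z -> le (join x y) z.
Proof. by case: HF => _ [_ [_ [_ [_ [H _]]]]]; case: (H x y) => _ [] _; apply. Qed.
Lemma meet_lb1 x y : le (meet x y) x.
Proof. by case: HF => _ [_ [_ [_ [_ [_ [H _]]]]]]; case: (H x y). Qed.
Lemma meet_lb2 x y : le (meet x y) y.
Proof. by case: HF => _ [_ [_ [_ [_ [_ [H _]]]]]]; case: (H x y) => _ []. Qed.
Lemma meet_glb x y z : le z x -> le z y -> le z (meet x y).
Proof. by case: HF => _ [_ [_ [_ [_ [_ [H _]]]]]]; case: (H x y) => _ [] _; apply. Qed.
Lemma lnorm x y : le (labs x) (labs y) -> `|x| <= `|y|.
Proof. by case: HF => _ [_ [_ [_ [_ [_ [_ H]]]]]]; apply: H. Qed.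

Lemma le_addl x y z : le x y -> le (z + x) (z + y).
Proof. by move=> /(le_addr z); rewrite ![_ + z]addrC. Qed.
Lemma le_add2 x y u v : le x y -> le u v -> le (x + u) (y + v).
Proof. move=> H1 H2; apply: (lleT (le_addr u H1)); exact: le_addl. Qed.
Lemma le_subP x y : le x y <-> le 0 (y - x).
Proof.
split=> H; first by have := le_addr (- x) H; rewrite subrr.
by have := le_addr x H; rewrite add0r subrK.
Qed.
Lemma le_opp x y : le x y -> le (- y) (- x).
Proof. by move/le_subP => H; apply/le_subP; rewrite opprK addrC. Qed.
Lemma le_scale (a : R) x y : 0 <= a -> le x y -> le (a *: x) (a *: y).
Proof. by move=> a0 /le_subP H; apply/le_subP; rewrite -scalerBr; apply: le_scale0. Qed.

Lemma labs_ub1 x : le x (labs x). Proof. exact: join_ub1. Qed.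
Lemma labs_ub2 x : le (- x) (labs x). Proof. exact: join_ub2. Qed.

Lemma labs_ge0 x : le 0 (labs x).
Proof.
have H := le_add2 (labs_ub1 x) (labs_ub2 x); rewrite subrr in H.
have := le_scale (a := 2^-1) _ H; rewrite scaler0.
have -> : (2^-1 : R) *: (labs x + labs x) = labs x.
  rewrite -{1 2}[labs x]scale1r -scalerDl scalerA.
  have -> : (2^-1 * (1+1) : R) = 1 by field.
  by rewrite scale1r.
by apply; rewrite invr_ge0.
Qed.

Lemma labs_pos x : le 0 x -> labs x = x.
Proof.
move=> x0; apply: lleA; last exact: labs_ub1.
apply: join_lub; first exact: lleR.
apply: (lleT (y := 0)); last by [].
by have := le_opp x0; rewrite oppr0.
Qed.
Lemma labs0 : labs 0 = 0. Proof. exact/labs_pos/lleR. Qed.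
Lemma labs_labs x : labs (labs x) = labs x. Proof. exact/labs_pos/labs_ge0. Qed.
Lemma norm_mono x y : le 0 x -> le x y -> `|x| <= `|y|.
Proof.
move=> x0 xy; apply: lnorm; rewrite labs_pos // labs_pos //; exact: lleT xy.
Qed.
Lemma norm_labs x : `|labs x| <= `|x|.
Proof. by apply: lnorm; rewrite labs_labs; apply: lleR. Qed.
Lemma meet_ge0 p h : le 0 p -> le 0 h -> le 0 (meet p h).
Proof. exact: meet_glb. Qed.
Lemma meet_mono p p' h h' : le p p' -> le h h' -> le (meet p h) (meet p' h').
Proof.
move=> H1 H2; apply: meet_glb; first exact: lleT (meet_lb1 _ _) H1.
exact: lleT (meet_lb2 _ _) H2.
Qed.
Lemma meet_addl z x y : z + meet x y = meet (z + x) (z + y).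
Proof.
apply: lleA; first by apply: meet_glb; apply: le_addl; [exact: meet_lb1|exact: meet_lb2].
have H : le (meet (z + x) (z + y) - z) (meet x y).
  apply: meet_glb.
    by have := le_addr (- z) (meet_lb1 (z + x) (z + y)); rewrite [X in le _ X]addrC addKr.
  by have := le_addr (- z) (meet_lb2 (z + x) (z + y)); rewrite [X in le _ X]addrC addKr.
by have := le_addl z H; rewrite addrC subrK.
Qed.
Lemma labs_tri a b : le (labs (a + b)) (labs a + labs b).
Proof.
apply: join_lub; first exact: le_add2 (labs_ub1 a) (labs_ub1 b).
by rewrite opprD; exact: le_add2 (labs_ub2 a) (labs_ub2 b).
Qed.
Lemma meet_subadd p q h : le 0 p -> le 0 q -> le 0 h ->
  le (meet (p + q) h) (meet p h + meet q h).
Proof.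
move=> p0 q0 h0; set m := meet (p + q) h.
suff H : le (m - meet q h) (meet p h).
  by have := le_addr (meet q h) H; rewrite subrK.
apply: meet_glb.
- suff H : le m (p + meet q h).
    by have := le_addr (- meet q h) H; rewrite addrK.
  rewrite meet_addl; apply: meet_glb; first exact: meet_lb1.
  apply: lleT (meet_lb2 _ _) _.
  by have := le_addr h p0; rewrite add0r.
- apply: (lleT (y := m)); last exact: meet_lb2.
  have := le_addl m (le_opp (meet_ge0 q0 h0)); rewrite oppr0 addr0; exact.
Qed.
Lemma join_scale (c : R) x y : 0 < c -> join (c *: x) (c *: y) = c *: join x y.
Proof.
move=> c0; apply: lleA.
  by apply: join_lub; apply: le_scale (ltW c0) _; [exact: join_ub1|exact: join_ub2].
have H : le (join x y) (c^-1 *: join (c *: x) (c *: y)).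
  apply: join_lub.
    have ci : 0 <= c^-1 by rewrite invr_ge0 ltW.
    have := le_scale ci (join_ub1 (c *: x) (c *: y)).
    by rewrite scalerA mulVf ?gt_eqF // scale1r.
  have ci : 0 <= c^-1 by rewrite invr_ge0 ltW.
  have := le_scale ci (join_ub2 (c *: x) (c *: y)).
  by rewrite scalerA mulVf ?gt_eqF // scale1r.
have := le_scale (ltW c0) H; rewrite scalerA mulfV ?gt_eqF // scale1r; exact.
Qed.
Lemma labs_scale (c : R) x : 0 < c -> labs (c *: x) = c *: labs x.
Proof. by move=> c0; rewrite /Defs.labs -join_scale // scalerN. Qed.
Lemma meet_scale_lb (s : R) u h : 0 < s -> s <= 1 -> le 0 h ->
  le (s *: meet u h) (meet (s *: u) h).
Proof.
move=> s0 s1 h0; apply: meet_glb; first exact: le_scale (ltW s0) (meet_lb1 _ _).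
apply: lleT (le_scale (ltW s0) (meet_lb2 _ _)) _.
apply/le_subP; rewrite -{1}[h]scale1r -scalerBl; apply: le_scale0 => //.
by rewrite subr_ge0.
Qed.

Definition N h f := `|meet (labs f) h|.

Lemma N_tri h a b : le 0 h -> N h (a + b) <= N h a + N h b.
Proof.
move=> h0; rewrite /N; apply: le_trans (ler_normD _ _).
apply: norm_mono; first exact: meet_ge0 (labs_ge0 _) h0.
apply: lleT (meet_subadd (labs_ge0 a) (labs_ge0 b) h0).
exact: meet_mono (labs_tri a b) (lleR h).
Qed.
Lemma N_le h f : le 0 h -> N h f <= `|f|.
Proof.
move=> h0; rewrite /N; apply: le_trans (norm_labs f).
apply: norm_mono; [exact: meet_ge0 (labs_ge0 _) h0|exact: meet_lb1].
Qed.
Lemma N0 h : le 0 h -> N h 0 = 0.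
Proof.
move=> h0; apply/eqP; rewrite eq_le {2}/N normr_ge0 andbT.
by apply: le_trans (N_le 0 h0) _; rewrite normr0.
Qed.
Lemma N_monoh h h' f : le 0 h -> le h h' -> N h f <= N h' f.
Proof.
move=> h0 hh; apply: norm_mono; first exact: meet_ge0 (labs_ge0 _) h0.
exact: meet_mono (lleR _) hh.
Qed.

Lemma N_lower h e (s : R) : le 0 h -> 0 < s -> s <= 1 -> s <= `|e| ->
  s * N h (`|e|^-1 *: e) <= N h e.
Proof.
move=> h0 s0 s1 se.
have n0 : 0 < `|e| by apply: lt_le_trans se.
set u := `|e|^-1 *: e.
have eu : e = `|e| *: u by rewrite /u scalerA mulfV ?gt_eqF // scale1r.
rewrite /N -[s]ger0_norm; last exact: ltW s0.
rewrite -normrZ.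
apply: norm_mono; first exact: le_scale0 (ltW s0) (meet_ge0 (labs_ge0 _) h0).
apply: lleT (meet_scale_lb (labs u) s0 s1 h0) _.
apply: meet_mono (lleR _); rewrite {1}eu (labs_scale u n0).
apply/le_subP; rewrite -scalerBl; apply: le_scale0; first by rewrite subr_ge0.
exact: labs_ge0.
Qed.

Lemma Uzero_N h eps f : Uzero L h eps f <-> N h f < eps.
Proof. by []. Qed.

Lemma open_ball_sub (O : set V) f : open O -> O f ->
  exists2 r : R, 0 < r & forall g, `|f - g| < r -> O g.
Proof.
rewrite openE => HO Of; have := HO f Of; rewrite /interior => /nbhs_ballP [r r0 Hr].
exists r => // g fg; apply: Hr; rewrite -ball_normE; exact: fg.
Qed.

Variable adm : V -> Prop.
Hypothesis A1 : forall h, adm h -> le 0 h.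

Lemma lin_open_open (O : set V) : lin_open L adm O -> open O.
Proof.
move=> HO; rewrite openE => f Of; rewrite /interior; apply/nbhs_ballP.
have [h [eps [ah e0 Hh]]] := HO f Of.
exists eps => // g; rewrite -ball_normE /= => fg; apply: Hh.
by apply/Uzero_N; apply: le_lt_trans (N_le _ (A1 ah)) _; rewrite distrC.
Qed.

Lemma disp_lb h eps (E : set V) : Uzero L h eps `&` sphere E = set0 ->
  forall u, E u -> `|u| = 1 -> eps <= N h u.
Proof.
move=> HD u Eu nu; rewrite leNgt; apply/negP => Hu.
have : (Uzero L h eps `&` sphere E) u by split.
by rewrite HD.
Qed.

Lemma smallN h eps (E : set V) : closed_subspace E -> adm h -> 0 < eps ->
  Uzero L h eps `&` sphere E = set0 ->
  forall e (s : R), E e -> 0 < s -> s <= 1 -> N h e < s * eps -> `|e| < s.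
Proof.
move=> [_ _ ES _] ah e0 HD e s Ee s0 s1 Ne; rewrite ltNge; apply/negP => se.
have n0 : 0 < `|e| by apply: lt_le_trans se.
have := N_lower (A1 ah) s0 s1 se.
have := disp_lb HD (ES `|e|^-1 e Ee).
rewrite normrZ normfV normr_id mulVf ?gt_eqF // => /(_ erefl) H1 H2.
have : s * eps <= N h e by apply: le_trans H2; rewrite ler_pM2l.
by rewrite leNgt Ne.
Qed.

Lemma T1 : gap_open (dispersed L adm).
Proof.
move=> G _ [h [eps [ah e0 HG]]]; exists (eps / 2); split; first by rewrite divr_gt0.
move=> H _ gapH; exists h, (eps / 2); split => //; first by rewrite divr_gt0.
apply/seteqP; split=> // y [Uy [Hy ny]].
have : (dist y (sphere G) < (eps / 2)%:E)%E.
  apply: le_lt_trans gapH; rewrite /gap /hausdorff le_max; apply/orP; right.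
  by apply: ereal_sup_ubound; exists y.
move=> /ereal_inf_lt [z [a Ga <-]]; rewrite lte_fin => ya.
have := N_tri y (a - y) (A1 ah); rewrite addrC subrK => Na.
have Nay := N_le (a - y) (A1 ah); rewrite distrC in ya.
have : (Uzero L h eps `&` sphere G) a.
  split => //; apply/Uzero_N; move/Uzero_N: Uy => Uy.
  rewrite (splitr eps); apply: le_lt_trans Na _; apply: ltrD => //.
  exact: le_lt_trans Nay ya.
by rewrite HG.
Qed.

Lemma subE (E : set V) e f : closed_subspace E -> E e -> E f -> E (e - f).
Proof.
move=> [_ EA ES _] Ee Ef; apply: EA => //.
by rewrite -scaleN1r; apply: ES.
Qed.

Lemma T2 (E : set V) : closed_subspace E ->
  (dispersed L adm E <-> coincide_on (lin_open L adm) E).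
Proof.
move=> cE; split.
- move=> [h [eps [ah e0 HD]]] A AE; split.
    by move=> [Q [HO ->]]; exists Q; split => //; exact: lin_open_open.
  move=> [Q [HO ->]].
  pose Q2 := [set g | exists f c, [/\ (E `&` Q) f, 0 < c, N h (g - f) < c &
     forall e, E e -> N h (e - f) < c -> (E `&` Q) e]].
  exists Q2; split.
    move=> g [f [c [Af c0 Ngf Hc]]]; exists h, (c - N h (g - f)); split => //.
      by rewrite subr_gt0.
    move=> g' /Uzero_N Ug'; exists f, c; split => //.
    have := N_tri (g' - g) (g - f) (A1 ah); rewrite addrA subrK => H.
    apply: le_lt_trans H _; by rewrite -ltrBrDr.
  apply/seteqP; split.
    move=> f [Ef Of]; split => //.
    have [r r0 Hr] := open_ball_sub HO Of.
    have m0 : 0 < Num.min r 1 by rewrite lt_min r0 ltr01.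
    exists f, (Num.min r 1 * eps); split => //; first exact: mulr_gt0.
      by rewrite subrr N0; [exact: mulr_gt0 | exact: A1].
    move=> e Ee Ne; split => //; apply: Hr; rewrite distrC.
    have m1 : Num.min r 1 <= 1 by rewrite ge_min lexx orbT.
    have := smallN cE ah e0 HD (subE cE Ee Ef) m0 m1 Ne.
    by move=> H; apply: lt_le_trans H _; rewrite ge_min lexx.
  by move=> g [Eg [f [c [_ _ Ngf Hc]]]]; apply: Hc.
- move=> HC.
  have := HC [set g | E g /\ `|g| < 1] (fun g (Hg : E g /\ `|g| < 1) => proj1 Hg).
  case => _ /(_ _) [].
    exists (ball (0:V) 1); split; first exact: ball_open.
    apply/seteqP; split => g [Eg ng]; split => //.
      by rewrite -ball_normE /= sub0r normrN.
    by move: ng; rewrite -ball_normE /= sub0r normrN.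
  move=> Q2 [HO' HA].
  have : (E `&` Q2) 0.
    by rewrite -HA; split; [case: cE | rewrite normr0 ltr01].
  move=> [_ /HO' [h [eps [ah e0 Hh]]]]; exists h, eps; split => //.
  apply/seteqP; split => // g [Ug [Eg ng]].
  have : (E `&` Q2) g by split => //; apply: Hh; rewrite subr0.
  by rewrite -HA => -[_]; rewrite ng ltxx.
Qed.

Hypothesis A2 : forall h1 h2, adm h1 -> adm h2 -> adm (h1 + h2).
Hypothesis A3 : adm 0.

Lemma ev_and (I : Type) (leI : I -> I -> Prop) (P Q : I -> Prop) :
  Defs.directed leI -> Defs.eventually leI P -> Defs.eventually leI Q ->
  Defs.eventually leI (fun i => P i /\ Q i).
Proof.
move=> [_ _ tr up] [i1 H1] [i2 H2]; have [k [k1 k2]] := up i1 i2.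
by exists k => i ki; split; [apply: H1; exact: tr ki|apply: H2; exact: tr ki].
Qed.

Lemma T3f (E : set V) : closed_subspace E ->
  dispersed L adm E -> complementary L adm E.
Proof.
move=> cE [h [eps [ah e0 HD]]] I leI x dir nx ln rn.
pose eta := Num.min (eps / 4) 1.
have et0 : 0 < eta by rewrite lt_min ltr01 andbT divr_gt0.
have [k [Hk1 Hk2]] : exists k, N h (x k) < eps / 2 /\ (dist (x k) E < eta%:E)%E.
  have [k Hk] := ev_and dir (ln h (eps / 2) ah (divr_gt0 e0 (ltr0Sn _ 1))) (rn eta et0).
  by exists k; apply: Hk; case: dir => _ rf _ _; apply: rf.
move: Hk2 => /ereal_inf_lt [z [a Ea <-]]; rewrite lte_fin => xa.
have et1 : eta <= 1 by rewrite ge_min lexx orbT.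
have et4 : eta <= eps / 4 by rewrite ge_min lexx.
have a0 : 0 < `|a|.
  rewrite normr_gt0; apply/negP => /eqP a0; move: xa; rewrite a0 subr0 nx.
  by rewrite ltNge et1.
pose y := `|a|^-1 *: a.
have Ey : E y by case: cE => _ _ ES _; apply: ES.
have ny : `|y| = 1 by rewrite normrZ normfV normr_id mulVf ?gt_eqF.
have ya : `|y - a| < eta.
  have -> : y - a = (`|a|^-1 - 1) *: a by rewrite scalerBl scale1r.
  have an0 : `|a| != 0 by rewrite gt_eqF.
  have -> : `|a|^-1 - 1 = (1 - `|a|) / `|a| by field.
  rewrite normrZ normrM normfV normr_id -mulrA mulVf // mulr1 -(nx k).
  apply: le_lt_trans xa; exact: ler_dist_dist.
have yx : `|y - x k| < eps / 2.
  apply: le_lt_trans (ler_distD a _ _) _.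
  rewrite distrC in xa.
  have : `|y - a| + `|a - x k| < eta + eta by apply: ltrD.
  move=> H; apply: lt_le_trans H _; lra.
have : (Uzero L h eps `&` sphere E) y.
  split => //; apply/Uzero_N.
  have := N_tri (x k) (y - x k) (A1 ah); rewrite addrC subrK => H.
  apply: le_lt_trans H _; rewrite (splitr eps); apply: ltrD => //.
  exact: le_lt_trans (N_le _ (A1 ah)) yx.
by rewrite HD.
Qed.

Lemma T3b (E : set V) : closed_subspace E ->
  complementary L adm E -> dispersed L adm E.
Proof.
move=> cE HC; case: (pselect (dispersed L adm E)) => // nd; exfalso.
have ex : forall p : {p : V * R | adm p.1 /\ 0 < p.2},
    exists g, N (sval p).1 g < (sval p).2 /\ E g /\ `|g| = 1.
  move=> [[h e] [ah e0]] /=; case: (pselect (exists g, N h g < e /\ E g /\ `|g| = 1)) => // ng.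
  exfalso; apply: nd.
  exists h, e; split => //; apply/seteqP; split => // g [Ug [Eg ng1]].
  by apply: ng; exists g.
have [x Hx] := choice ex.
pose I := {p : V * R | adm p.1 /\ 0 < p.2}.
pose leI (p q : I) := le (sval p).1 (sval q).1 /\ (sval q).2 <= (sval p).2.
apply: (HC I leI x).
- split.
  + by exists (exist (fun p : V * R => adm p.1 /\ 0 < p.2) (0, 1) (conj A3 ltr01)).
  + by move=> i; split; [exact: lleR|exact: lexx].
  + move=> i j k [ij1 ij2] [jk1 jk2]; split; first exact: lleT ij1 jk1.
    exact: le_trans jk2 ij2.
  + move=> [[h1 e1] [a1 p1]] [[h2 e2] [a2 p2]].
    have H : adm (h1 + h2, Num.min e1 e2).1 /\ 0 < (h1 + h2, Num.min e1 e2).2.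
      by split; [exact: A2|rewrite /= lt_min p1 p2].
    exists (exist (fun p : V * R => adm p.1 /\ 0 < p.2) (h1 + h2, Num.min e1 e2) H); rewrite /leI /=; split; split.
    * by have := le_addl h1 (A1 a2); rewrite addr0.
    * by rewrite ge_min lexx.
    * by have := le_addr h2 (A1 a1); rewrite add0r.
    * by rewrite ge_min lexx orbT.
- by move=> i; case: (Hx i) => _ [].
- move=> h e ah e0; exists (exist (fun p : V * R => adm p.1 /\ 0 < p.2) (h, e) (conj ah e0)); move=> i [hi ei] /=.
  apply/Uzero_N; case: (Hx i) => Ni _; apply: le_lt_trans (N_monoh _ (A1 ah) hi) _.
  exact: lt_le_trans Ni ei.
- move=> e e0; exists (exist (fun p : V * R => adm p.1 /\ 0 < p.2) (0, 1) (conj A3 ltr01)); move=> i _.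
  apply: (@le_lt_trans _ _ ((`|x i - x i|)%:E)%E).
    by apply: ereal_inf_lbound; exists (x i) => //; case: (Hx i) => _ [].
  by rewrite subrr normr0 lte_fin.
Qed.

Lemma oc0 : order_continuous L 0.
Proof.
move=> I leI x [[i0 _] _ _ _] _ bnd _ eps e0; exists i0 => i _.
have -> : x i = 0 by case: (bnd i); rewrite labs0 => H1 H2; apply: lleA.
by rewrite normr0.
Qed.

Lemma oc_add h1 h2 : le 0 h1 -> le 0 h2 -> order_continuous L h1 ->
  order_continuous L h2 -> order_continuous L (h1 + h2).
Proof.
move=> p1 p2 o1 o2 I leI x dir dec bnd inf eps e0.
have p12 : le 0 (h1 + h2) by have := le_add2 p1 p2; rewrite addr0.
have {}bnd i : le 0 (x i) /\ le (x i) (h1 + h2) by rewrite -(labs_pos p12).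
pose y i := meet (x i) h1.
pose z i := x i - y i.
have y0 i : le 0 (y i) by apply: meet_ge0 p1; case: (bnd i).
have e2 : 0 < eps / 2 by rewrite divr_gt0.
have ev1 : Defs.eventually leI (fun i => `|y i| < eps / 2).
  apply: o1 => //.
  - by move=> i j ij; apply: meet_mono (dec _ _ ij) (lleR _).
  - by move=> i; split => //; rewrite labs_pos //; exact: meet_lb2.
  - by move=> g Hg; apply: inf => i; apply: lleT (Hg i) (meet_lb1 _ _).
have zx i : le (z i) (x i).
  by have := le_addl (x i) (le_opp (y0 i)); rewrite oppr0 addr0.
have ev2 : Defs.eventually leI (fun i => `|z i| < eps / 2).
  apply: o2 => //.
  - move=> i j ij; rewrite /z /y.
    set a := x j; set b := x i; set ma := meet a h1; set mb := meet b h1.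
    have H : le (a + mb) (b + ma).
      rewrite /ma /mb !meet_addl; apply: meet_mono.
        by rewrite addrC; exact: lleR.
      exact: le_addr (dec _ _ ij).
    have := le_addr (- (ma + mb)) H.
    by rewrite opprD !addrA (addrAC a mb) addrK addrK.
  - move=> i; split; first by rewrite /z; apply/(@le_subP (y i) (x i)); rewrite /y; exact: meet_lb1.
    rewrite labs_pos //.
    have H : le (x i) (h2 + y i).
      rewrite /y meet_addl; apply: meet_glb.
        by have := le_addr (x i) p2; rewrite add0r.
      by rewrite addrC; case: (bnd i).
    by have := le_addr (- y i) H; rewrite addrK.
  - by move=> g Hg; apply: inf => i; apply: lleT (Hg i) (zx i).
have [k Hk] := ev_and dir ev1 ev2; exists k => i ki.
have -> : x i = y i + z i by rewrite /z addrC subrK.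
case: (Hk i ki) => H1 H2; apply: le_lt_trans (ler_normD _ _) _.
by rewrite (splitr eps); apply: ltrD.
Qed.

End Lat.

Unset Implicit Arguments. Set Strict Implicit.

Theorem proposition4p1 (R : realType) (V : completeNormedModType R)
  (F : lattice_ops V) (HF : is_banach_lattice F) :
  gap_open (weakly_dispersed F) /\
  gap_open (strongly_dispersed F) /\
  (forall E : set V, closed_subspace E ->
     (weakly_dispersed F E <-> coincide_on (un_open F) E) /\
     (weakly_dispersed F E <-> complementary F (un_h F) E)) /\
  (forall E : set V, closed_subspace E ->
     (strongly_dispersed F E <-> coincide_on (una_open F) E) /\
     (strongly_dispersed F E <-> complementary F (una_h F) E)).
Proof.
have A1u : forall h, un_h F h -> lle F 0 h by [].
have A2u : forall h1 h2, un_h F h1 -> un_h F h2 -> un_h F (h1 + h2).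
  by move=> h1 h2 p1 p2; have := le_add2 HF p1 p2; rewrite addr0.
have A3u : un_h F 0 by exact: lleR.
have A1a : forall h, una_h F h -> lle F 0 h by move=> h [].
have A2a : forall h1 h2, una_h F h1 -> una_h F h2 -> una_h F (h1 + h2).
  move=> h1 h2 [p1 o1] [p2 o2]; split; last exact: oc_add.
  by have := le_add2 HF p1 p2; rewrite addr0.
have A3a : una_h F 0 by split; [exact: lleR|exact: oc0].
split; first exact: T1 A1u.
split; first exact: T1 A1a.
split=> E cE; (split; [exact: T2|split; [exact: T3f|exact: T3b]]).
Qed.
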